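(* Let $X$ and $Y$ be nontrivial real Banach spaces. (a) If $X^*$ has the weak$^*$ diameter $2$ property, then $(X\oplus_1 Y)^*$ has the weak$^*$ diameter $2$ property. (b) If $X^*$ and $Y^*$ have the weak$^*$ diameter $2$ property and $1<p\leq\infty$, then $(X\oplus_p Y)^*$ has the weak$^*$ diameter $2$ property. (c) If $(X\oplus_p Y)^*$ has the weak$^*$ diameter $2$ property, where $1<p\leq\infty$, then $X^*$ has the weak$^*$ diameter $2$ property.
   Context: For $1\le p<\infty$, $X\oplus_p Y$ is $X\times Y$ with norm $(\|x\|^p+\|y\|^p)^{1/p}$; $X\oplus_\infty Y$ has norm $\max\{\|x\|,\|y\|\}$. For a Banach space $Z$, $Z^*$ has the weak$^*$ diameter $2$ property if every nonempty relatively weak$^*$ open subset of the closed unit ball $B_{Z^*}$ has diameter $2$. *)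

(* Defs.v *)
From HB Require Import structures.
From mathcomp Require Import all_boot all_order all_algebra.
From mathcomp Require Import all_classical all_reals all_analysis.
Set Implicit Arguments. Unset Strict Implicit. Unset Printing Implicit Defensive.
Import Order.TTheory GRing.Theory Num.Theory.
Import numFieldNormedType.Exports.
Local Open Scope classical_set_scope.
Local Open Scope ring_scope.

Section Dual.
Variables (R : realType) (V : lmodType R) (N : V -> R).

Definition is_dual (f : V -> R) : Prop :=
  (forall (a : R) (u v : V), f (a *: u + v) = a * f u + f v) /\
  exists C : R, forall x, `|f x| <= C * N x.

Definition dnorm (f : V -> R) : R := sup [set `|f x| | x in [set x | N x <= 1]].

Definition dual_ball : set (V -> R) := [set f | is_dual f /\ dnorm f <= 1].

(* W is a relatively weak* open subset of the dual unit ball: W is open for the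
   trace on the ball of the weak* topology (initial topology of the evaluations) *)
Definition wstar_rel_open (W : set (V -> R)) : Prop :=
  W `<=` dual_ball /\
  forall f, W f -> exists (s : seq V) (e : R), 0 < e /\
    [set g | dual_ball g /\ forall x, x \in s -> `|g x - f x| < e] `<=` W.

Definition dual_diam (W : set (V -> R)) : R :=
  sup [set r | exists f g, W f /\ W g /\ r = dnorm (f \- g)].

Definition wstar_d2p : Prop :=
  forall W, wstar_rel_open W -> W !=set0 -> dual_diam W = 2.

End Dual.

Definition psum_norm (R : realType) (X Y : normedModType R) (p : \bar R)
  (z : (X * Y)%type) : R :=
  match p with
  | +oo%E => Num.max `|z.1| `|z.2|
  | (r%:E)%E => (`|z.1| `^ r + `|z.2| `^ r) `^ r^-1
  | -oo%E => 0
  end.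
Arguments psum_norm {R} X Y p z.

(* Main.v *)
Require Import Defs.
From HB Require Import structures.
From mathcomp Require Import all_boot all_order all_algebra.
From mathcomp Require Import all_classical all_reals all_analysis.
From mathcomp Require Import ring lra.
Import Order.TTheory GRing.Theory Num.Theory.
Import numFieldNormedType.Exports.
Local Open Scope classical_set_scope.
Local Open Scope ring_scope.
Set Implicit Arguments. Unset Strict Implicit. Unset Printing Implicit Defensive.
Definition normlike (R : realType) (V : lmodType R) (N : V -> R) :=
  [/\ (forall x, 0 <= N x), (forall (a : R) x, N (a *: x) = `|a| * N x) &
  (forall x, N x = 0 -> x = 0)].

Section Basics.
Context (R : realType) (V : lmodType R) (N : V -> R).
Variable nl : normlike N.
Let N0 : forall x, 0 <= N x. Proof. by case: nl. Qed.
Let NZ : forall (a : R) x, N (a *: x) = `|a| * N x. Proof. by case: nl. Qed.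
Let Ndef : forall x, N x = 0 -> x = 0. Proof. by case: nl. Qed.

Lemma Nzero : N 0 = 0.
Proof. by rewrite -(scale0r 0) NZ normr0 mul0r. Qed.

Lemma NN x : N (- x) = N x.
Proof. by rewrite -scaleN1r NZ normrN normr1 mul1r. Qed.

Section Lin.
Variable f : V -> R.
Hypothesis fd : is_dual N f.

Lemma duD u v : f (u + v) = f u + f v.
Proof. by case: fd => L _; rewrite -{1}(scale1r u) L mul1r. Qed.

Lemma du0 : f 0 = 0.
Proof. by have := duD 0 0; rewrite addr0 => /eqP; rewrite -subr_eq subrr eq_sym => /eqP. Qed.

Lemma duZ a u : f (a *: u) = a * f u.
Proof. by case: fd => L _; rewrite -(addr0 (a *: u)) L du0 addr0. Qed.

Lemma duN u : f (- u) = - f u.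
Proof. by rewrite -scaleN1r duZ mulN1r. Qed.

Lemma duB u v : f (u - v) = f u - f v.
Proof. by rewrite duD duN. Qed.

Lemma du_hasub : has_ubound [set `|f x| | x in [set x | N x <= 1]].
Proof.
case: fd => _ [C HC]; exists `|C| => _ [x /= Nx <-].
apply: (le_trans (HC x)); apply: (le_trans (ler_norm _)).
by rewrite normrM (ger0_norm (N0 x)) ler_piMr.
Qed.

Lemma dn_ub x : N x <= 1 -> `|f x| <= dnorm N f.
Proof. by move=> Nx; apply: ub_le_sup du_hasub _ _; exists x. Qed.

Lemma dn_ge0 : 0 <= dnorm N f.
Proof. by apply: le_trans (dn_ub (x := 0) _); rewrite ?Nzero// du0 normr0. Qed.

Lemma dn_gt t : t < dnorm N f -> exists x, N x <= 1 /\ t < f x.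
Proof.
move=> /(sup_gt _) [].
  by exists `|f 0|, 0 => //=; rewrite Nzero.
move=> _ [x /= Nx <-] tfx.
have [fx0|fx0] := leP 0 (f x).
  by exists x; split => //; rewrite -(ger0_norm fx0).
exists (- x); split; first by rewrite NN.
by rewrite duN -(ltr0_norm fx0).
Qed.

Lemma dn_bound x : `|f x| <= dnorm N f * N x.
Proof.
have [Nx0|Nxp] := eqVneq (N x) 0.
  by rewrite (Ndef Nx0) du0 normr0 mulr_ge0 ?dn_ge0 ?N0.
have Np : 0 < N x by rewrite lt_neqAle eq_sym Nxp N0.
have := dn_ub (x := (N x)^-1 *: x).
rewrite NZ duZ normrM ger0_norm ?invr_ge0 ?N0 // mulVf // lexx => /(_ isT).
by rewrite ler_pdivrMl // mulrC.
Qed.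

End Lin.

Lemma dn_le (f : V -> R) c : (forall x, N x <= 1 -> `|f x| <= c) -> dnorm N f <= c.
Proof.
move=> H; apply: ge_sup; first by exists `|f 0|, 0 => //=; rewrite Nzero.
by move=> _ [x /= Nx <-]; exact: H.
Qed.

Lemma is_dual_comb (f g : V -> R) a b : is_dual N f -> is_dual N g ->
  is_dual N (fun x => a * f x + b * g x).
Proof.
move=> fd gd; split.
  move=> c u v; rewrite (duD fd) (duD gd) (duZ fd) (duZ gd); ring.
exists (`|a| * dnorm N f + `|b| * dnorm N g) => x.
rewrite mulrDl; apply: (le_trans (ler_normD _ _)); rewrite !normrM -!mulrA.
by apply: lerD; apply: ler_wpM2l => //; apply: dn_bound.
Qed.

Lemma is_dual_sub (f g : V -> R) : is_dual N f -> is_dual N g -> is_dual N (f \- g).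
Proof.
move=> fd gd; have := is_dual_comb 1 (-1) fd gd.
by congr is_dual; apply: funext => x /=; rewrite mul1r mulN1r.
Qed.

Lemma dn_comb (f g : V -> R) a b : is_dual N f -> is_dual N g ->
  dnorm N (fun x => a * f x + b * g x) <= `|a| * dnorm N f + `|b| * dnorm N g.
Proof.
move=> fd gd; apply: dn_le => x Nx; apply: (le_trans (ler_normD _ _)).
by rewrite !normrM; apply: lerD; apply: ler_wpM2l => //; apply: dn_ub.
Qed.

Lemma dn_sub (f g : V -> R) : is_dual N f -> is_dual N g ->
  dnorm N (f \- g) <= dnorm N f + dnorm N g.
Proof.
move=> fd gd; have := dn_comb 1 (-1) fd gd; rewrite normrN normr1 !mul1r.
by congr (_ <= _); congr dnorm; apply: funext => x /=; rewrite mul1r mulN1r.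
Qed.

End Basics.

Section Opens.
Context (R : realType) (V : lmodType R) (N : V -> R).
Variable nl : normlike N.

Lemma fin_margin (s : seq V) (F : V -> R) e : (forall x, x \in s -> F x < e) ->
  exists2 d, 0 < d & forall x, x \in s -> F x + d <= e.
Proof.
elim: s => [|a s IH] H; first by exists 1.
have [d d0 Hd] : exists2 d, 0 < d & forall x, x \in s -> F x + d <= e.
  by apply: IH => x xs; apply: H; rewrite in_cons xs orbT.
have Ha : F a < e by apply: H; rewrite in_cons eqxx.
exists (Num.min d (e - F a)); first by rewrite lt_min d0 subr_gt0.
move=> x; rewrite in_cons => /orP[/eqP->|xs].
  by rewrite -lerBrDl ge_min lexx orbT.
by apply: le_trans (Hd x xs); rewrite lerD2l ge_min lexx.
Qed.

Lemma nbhd_open (f : V -> R) (s : seq V) e :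
  wstar_rel_open N [set g | dual_ball N g /\ forall x, x \in s -> `|g x - f x| < e].
Proof.
split; first by move=> g [].
move=> g [gb gs]; have [d d0 Hd] := fin_margin gs.
exists s, d; split => // k [kb ks]; split => // x xs.
have := Hd x xs; apply: lt_le_trans.
rewrite -(subrK (g x) (k x)) -addrA addrC; apply: le_lt_trans (ler_normD _ _) _.
by rewrite addrC ltrD2l ks.
Qed.

Lemma slice_open (x0 : V) c : wstar_rel_open N [set g | dual_ball N g /\ c < g x0].
Proof.
split; first by move=> g [].
move=> g [gb gc]; exists [:: x0], (g x0 - c); split; first by rewrite subr_gt0.
move=> k [kb /(_ x0)]; rewrite mem_head => /(_ isT) H; split => //.
move: H; rewrite ltr_norml => /andP[H _]; lra.
Qed.

Lemma inter_open (W1 W2 : set (V -> R)) : wstar_rel_open N W1 -> wstar_rel_open N W2 ->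
  wstar_rel_open N (W1 `&` W2).
Proof.
move=> [sub1 o1] [_ o2]; split; first by move=> g [/sub1].
move=> g [/o1 [s1 [e1 [e10 H1]]] /o2 [s2 [e2 [e20 H2]]]].
exists (s1 ++ s2), (Num.min e1 e2); split; first by rewrite lt_min e10.
move=> k [kb ks]; split.
  apply: H1; split => // x xs; apply: lt_le_trans (ks x _) _; first by rewrite mem_cat xs.
  by rewrite ge_min lexx.
apply: H2; split => // x xs; apply: lt_le_trans (ks x _) _; first by rewrite mem_cat xs orbT.
by rewrite ge_min lexx orbT.
Qed.

Lemma d2p_extract : wstar_d2p N -> forall W f, wstar_rel_open N W -> W f ->
  forall d, 0 < d -> exists g1 g2, W g1 /\ W g2 /\ 2 - d < dnorm N (g1 \- g2).
Proof.
move=> D W f Wo Wf d d0; have := D W Wo (ex_intro _ f Wf); rewrite /dual_diam => Hs.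
have : 2 - d < sup [set r | exists f g, W f /\ W g /\ r = dnorm N (f \- g)].
  by rewrite Hs ltrBlDr ltrDl.
move/sup_gt => [].
  by exists (dnorm N (f \- f)), f, f.
by move=> _ [g1 [g2 [W1 [W2 ->]]]] H; exists g1, g2.
Qed.

Lemma d2p_intro : (forall W f, wstar_rel_open N W -> W f ->
  forall d, 0 < d -> exists g1 g2, W g1 /\ W g2 /\ 2 - d <= dnorm N (g1 \- g2)) ->
  wstar_d2p N.
Proof.
move=> H W Wo [f Wf]; rewrite /dual_diam; apply/eqP; rewrite eq_le; apply/andP; split.
  apply: ge_sup; first by exists (dnorm N (f \- f)), f, f.
  move=> _ [g1 [g2 [W1 [W2 ->]]]].
  have [[g1d g1n] [g2d g2n]] := (Wo.1 _ W1, Wo.1 _ W2).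
  apply: le_trans (dn_sub nl g1d g2d) _.
  by rewrite -[2]/(1 + 1); apply: lerD.
apply/ler_addgt0Pr => d d0; have [g1 [g2 [W1 [W2 Hd]]]] := H W f Wo Wf d d0.
rewrite -lerBlDr; apply: le_trans Hd _.
apply: ub_le_sup; last by exists g1, g2.
exists 2 => _ [h1 [h2 [W1' [W2' ->]]]].
have [[g1d g1n] [g2d g2n]] := (Wo.1 _ W1', Wo.1 _ W2').
apply: le_trans (dn_sub nl g1d g2d) _.
by rewrite -[2]/(1 + 1); apply: lerD.
Qed.

End Opens.

Section Pullback.
Context (R : realType) (V1 V2 : lmodType R) (N1 : V1 -> R) (N2 : V2 -> R).
Variables (pi : V2 -> V1) (c : R) (G : V2 -> R).
Let Phi (u : V1 -> R) : V2 -> R := fun z => c * u (pi z) + G z.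
Hypothesis Phib : forall u, dual_ball N1 u -> dual_ball N2 (Phi u).

Lemma pullback_open (W : set (V2 -> R)) : wstar_rel_open N2 W ->
  wstar_rel_open N1 [set u | dual_ball N1 u /\ W (Phi u)].
Proof.
move=> [Wsub Wo]; split; first by move=> u [].
move=> u [ub /Wo [s [e [e0 H]]]].
exists (map pi s), (e / (`|c| + 1)); split; first by rewrite divr_gt0 // ltr_wpDl.
move=> g [gb gs]; split => //; apply: H; split; first exact: Phib.
move=> z zs; rewrite /Phi opprD addrACA subrr addr0 -mulrBr normrM.
have := gs (pi z) (map_f pi zs) => H1.
have [->|c0] := eqVneq c 0; first by rewrite normr0 mul0r.
apply: (le_lt_trans (y := `|c| * (e / (`|c| + 1)))).
  by apply: ler_wpM2l => //; apply: ltW.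
rewrite mulrA ltr_pdivrMr ?ltr_wpDl // mulrC ltr_pM2l //.
by rewrite ltrDl.
Qed.

End Pullback.

Definition nu (R : realType) (p : \bar R) (u v : R) : R :=
  match p with
  | +oo%E => Num.max u v
  | (r%:E)%E => (u `^ r + v `^ r) `^ r^-1
  | -oo%E => 0
  end.

Lemma psumE (R : realType) (X Y : normedModType R) p z :
  psum_norm X Y p z = nu p `|z.1| `|z.2|.
Proof. by case: p. Qed.

Section Nu.
Context (R : realType) (p : \bar R).
Hypothesis hp : (1%:E <= p)%E.

Lemma nu_ge0 u v : 0 <= u -> 0 <= v -> 0 <= nu p u v.
Proof.
by case: p hp => [r||] //= _ u0 v0; [exact: powR_ge0 | rewrite le_max u0].
Qed.

Lemma nu_u0 u : 0 <= u -> nu p u 0 = u.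
Proof.
case: p hp => [r||] //= r1 u0; last by rewrite max_l.
have r0 : r != 0 by rewrite gt_eqF // (lt_le_trans ltr01) // -lee_fin.
by rewrite powR0 // addr0 -powRrM mulfV // powRr1.
Qed.

Lemma nu_0v v : 0 <= v -> nu p 0 v = v.
Proof.
case: p hp => [r||] //= r1 v0; last by rewrite max_r.
have r0 : r != 0 by rewrite gt_eqF // (lt_le_trans ltr01) // -lee_fin.
by rewrite powR0 // add0r -powRrM mulfV // powRr1.
Qed.

Lemma nu_hom s u v : 0 <= s -> 0 <= u -> 0 <= v -> nu p (s * u) (s * v) = s * nu p u v.
Proof.
case: p hp => [r||] //= r1 s0 u0 v0; last first.
  have [uv|vu] := leP u v.
    by rewrite max_r // ler_wpM2l.
  by rewrite max_l // ler_wpM2l // ltW.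
have r0 : r != 0 by rewrite gt_eqF // (lt_le_trans ltr01) // -lee_fin.
rewrite !powRM // -mulrDr powRM ?powR_ge0 // ?addr_ge0 ?powR_ge0 //.
by rewrite -powRrM mulfV // powRr1.
Qed.

Lemma nu_mono u u' v v' : 0 <= u -> 0 <= v -> u <= u' -> v <= v' ->
  nu p u v <= nu p u' v'.
Proof.
case: p hp => [r||] //= r1 u0 v0 uu vv; last first.
  by rewrite ge_max !le_max uu vv orbT.
have r0 : 0 < r by rewrite (lt_le_trans ltr01) // -lee_fin.
have hr : 0 <= r by rewrite ltW.
have hu : u `^ r <= u' `^ r by apply: ge0_ler_powR; rewrite ?nnegrE // (le_trans u0).
have hv : v `^ r <= v' `^ r by apply: ge0_ler_powR; rewrite ?nnegrE // (le_trans v0).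
apply: ge0_ler_powR; rewrite ?invr_ge0 ?nnegrE ?addr_ge0 ?powR_ge0 //.
exact: lerD.
Qed.

Lemma nu_geu u v : 0 <= u -> 0 <= v -> u <= nu p u v.
Proof. by move=> u0 v0; rewrite -{1}(nu_u0 u0) nu_mono. Qed.

Lemma nu_gev u v : 0 <= u -> 0 <= v -> v <= nu p u v.
Proof. by move=> u0 v0; rewrite -{1}(nu_0v v0) nu_mono. Qed.

End Nu.

Section PsumNorm.
Context (R : realType) (X Y : normedModType R) (p : \bar R).
Hypothesis hp : (1%:E <= p)%E.
Notation N := (psum_norm X Y p).

Lemma ps_ge0 z : 0 <= N z.
Proof. by rewrite psumE nu_ge0. Qed.

Lemma ps_Z (a : R) z : N (a *: z) = `|a| * N z.
Proof. by rewrite !psumE /= !normrZ nu_hom. Qed.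

Lemma ps_ge1 z : `|z.1| <= N z.
Proof. by rewrite psumE nu_geu. Qed.

Lemma ps_ge2 z : `|z.2| <= N z.
Proof. by rewrite psumE nu_gev. Qed.

Lemma ps_def z : N z = 0 -> z = 0.
Proof.
case: z => x y H; have h1 := ps_ge1 (x, y); have h2 := ps_ge2 (x, y).
rewrite H /= in h1 h2.
have -> : x = 0 by apply/normr0_eq0/eqP; rewrite eq_le h1 normr_ge0.
have -> : y = 0 by apply/normr0_eq0/eqP; rewrite eq_le h2 normr_ge0.
by [].
Qed.

Lemma ps_x0 x : N (x, 0) = `|x|.
Proof. by rewrite psumE /= normr0 nu_u0. Qed.

Lemma ps_0y y : N (0, y) = `|y|.
Proof. by rewrite psumE /= normr0 nu_0v. Qed.

End PsumNorm.

Section Prod.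
Context (R : realType) (X Y : normedModType R) (p : \bar R).
Hypothesis hp : (1%:E <= p)%E.
Notation N := (psum_norm X Y p).
Notation NX := (fun x : X => `|x|).
Notation NY := (fun y : Y => `|y|).

Lemma nlX : normlike NX.
Proof. by split => [x|a x|x]; [exact: normr_ge0|exact: normrZ|exact: normr0_eq0]. Qed.
Lemma nlY : normlike NY.
Proof. by split => [x|a x|x]; [exact: normr_ge0|exact: normrZ|exact: normr0_eq0]. Qed.
Lemma nlZ : normlike N.
Proof. by split => [x|a x|x]; [exact: ps_ge0|exact: ps_Z|exact: ps_def]. Qed.

Lemma pairD1 (a : R) (x x' : X) : ((a *: x + x', 0) : X * Y) = a *: (x, 0) + (x', 0).
Proof. by apply/eqP; rewrite xpair_eqE /= scaler0 addr0 !eqxx. Qed.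

Lemma pairD2 (a : R) (y y' : Y) : ((0, a *: y + y') : X * Y) = a *: (0, y) + (0, y').
Proof. by apply/eqP; rewrite xpair_eqE /= scaler0 addr0 !eqxx. Qed.

Lemma rest1_dual (h : X * Y -> R) : is_dual N h ->
  is_dual NX (fun x => h (x, 0)) /\ dnorm NX (fun x => h (x, 0)) <= dnorm N h.
Proof.
move=> hd; split.
  split; first by move=> a x x'; rewrite pairD1 (duD hd) (duZ hd).
  exists (dnorm N h) => x; have := dn_bound nlZ hd (x, 0).
  by rewrite (@ps_x0 _ _ _ _ hp).
apply: (dn_le nlX) => x Hx; have := dn_ub nlZ hd (x := (x, 0)).
by rewrite (@ps_x0 _ _ _ _ hp) => /(_ Hx).
Qed.

Lemma rest2_dual (h : X * Y -> R) : is_dual N h ->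
  is_dual NY (fun y => h (0, y)) /\ dnorm NY (fun y => h (0, y)) <= dnorm N h.
Proof.
move=> hd; split.
  split; first by move=> a x x'; rewrite pairD2 (duD hd) (duZ hd).
  exists (dnorm N h) => x; have := dn_bound nlZ hd (0, x).
  by rewrite (@ps_0y _ _ _ _ hp).
apply: (dn_le nlY) => x Hx; have := dn_ub nlZ hd (x := (0, x)).
by rewrite (@ps_0y _ _ _ _ hp) => /(_ Hx).
Qed.

Lemma decomp (h : X * Y -> R) : is_dual N h ->
  h = fun z => h (z.1, 0) + h (0, z.2).
Proof.
move=> hd; apply: funext => -[x y] /=; rewrite -(duD hd).
by congr h; apply/eqP; rewrite xpair_eqE /= addr0 add0r !eqxx.
Qed.

Lemma comb_dual (u : X -> R) (g : Y -> R) (a b : R) : is_dual NX u -> is_dual NY g ->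
  is_dual N (fun z => a * u z.1 + b * g z.2).
Proof.
move=> ud gd; split.
  by move=> c z w /=; rewrite (duD ud) (duD gd) (duZ ud) (duZ gd); ring.
exists (`|a| * dnorm NX u + `|b| * dnorm NY g) => z; rewrite mulrDl.
apply: (le_trans (ler_normD _ _)); rewrite !normrM -!mulrA.
apply: lerD; apply: ler_wpM2l => //.
  apply: le_trans (dn_bound nlX ud _) _.
  by apply: ler_wpM2l; [exact (dn_ge0 nlX ud)|exact: (ps_ge1 hp)].
apply: le_trans (dn_bound nlY gd _) _.
by apply: ler_wpM2l; [exact (dn_ge0 nlY gd)|exact: (ps_ge2 hp)].
Qed.

End Prod.

Section PartA.
Context (R : realType) (X Y : normedModType R).
Notation N := (psum_norm X Y 1%:E).
Notation NX := (fun x : X => `|x|).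
Notation NY := (fun y : Y => `|y|).
Let hp : (1%:E <= (1%:E : \bar R))%E. Proof. by []. Qed.
Let nlZ1 := @nlZ R X Y _ hp.

Lemma N1E z : N z = `|z.1| + `|z.2|.
Proof. by rewrite /= invr1 !powRr1 ?addr_ge0. Qed.

Lemma partA : wstar_d2p NX -> wstar_d2p N.
Proof.
move=> DX; apply (d2p_intro nlZ1) => W h0 Wo W0 d d0.
have [h0d h0n] := Wo.1 _ W0.
have [g0d g0n] := rest2_dual hp h0d.
have [f0d f0n] := rest1_dual hp h0d.
pose g0 := fun y => h0 (0, y).
pose Phi (u : X -> R) := fun z : X * Y => 1 * u z.1 + 1 * g0 z.2.
have Phib : forall u, dual_ball NX u -> dual_ball N (Phi u).
  move=> u [ud un]; have Pd : is_dual N (Phi u).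
    exact (comb_dual hp 1 1 ud g0d).
  split => //; apply: (dn_le nlZ1) => z Nz; apply: le_trans Nz; rewrite N1E /Phi !mul1r.
  apply: (le_trans (ler_normD _ _)); apply: lerD.
    apply: le_trans (dn_bound (@nlX R X) ud _) _; rewrite ler_piMl //.
  apply: le_trans (dn_bound (@nlY R Y) g0d _) _; rewrite ler_piMl //.
  exact: le_trans g0n h0n.
have Uo := pullback_open Phib Wo.
have U0 : dual_ball NX (fun x => h0 (x, 0)) /\ W (Phi (fun x => h0 (x, 0))).
  split; first by split => //; exact: le_trans f0n h0n.
  have -> : Phi (fun x => h0 (x, 0)) = h0 => //.
  apply: funext => z; rewrite /Phi /g0 !mul1r.
  by rewrite [RHS](congr1 (fun F => F z) (decomp h0d)).
have [u1 [u2 [[u1b W1] [[u2b W2] Hd]]]] := d2p_extract DX Uo U0 d0.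
exists (Phi u1), (Phi u2); do 2!split => //.
have [x [Nx Hx]] := dn_gt (@nlX R X) (is_dual_sub (@nlX R X) u1b.1 u2b.1) Hd.
apply: le_trans (ltW Hx) _; apply: le_trans (ler_norm _) _.
have -> : (u1 \- u2) x = (Phi u1 \- Phi u2) (x, 0).
  by rewrite /Phi /g0 /= !mul1r; ring.
have := dn_ub nlZ1 (is_dual_sub nlZ1 (Phib _ u1b).1 (Phib _ u2b).1) (x := (x, 0)).
by rewrite (@ps_x0 _ _ _ _ hp) => /(_ Nx).
Qed.

End PartA.

Section DualPoint.
Context (R : realType) (p : \bar R).
Hypothesis hp : (1%:E <= p)%E.

Lemma dual_point (a b : R) : 0 <= a -> 0 <= b ->
  (forall u v, 0 <= u -> 0 <= v -> a * u + b * v <= nu p u v) ->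
  exists al, [/\ a <= al,
    (forall u v, 0 <= u -> 0 <= v -> al * u + b * v <= nu p u v) &
    forall t, 0 < t -> exists lam mu,
      [/\ 0 <= lam, 0 <= mu, nu p lam mu <= 1 & 1 - t < al * lam + b * mu]].
Proof.
move=> a0 b0 Ha.
pose A := [set al : R | 0 <= al /\
  forall u v, 0 <= u -> 0 <= v -> al * u + b * v <= nu p u v].
have Aa : A a by split.
have Aub : ubound A 1.
  move=> al [al0 H]; have := H 1 0 ler01 (lexx 0).
  by rewrite mulr1 mulr0 addr0 nu_u0 // ler01.
have Ahas : has_sup A by split; [exists a | exists 1].
have aS : a <= sup A by apply: ub_le_sup Aa; exists 1.
exists (sup A); split => //.
  move=> u v u0 v0; apply/ler_addgt0Pr => e e0.
  have ue : 0 < e / (u + 1) by rewrite divr_gt0 // ltr_wpDl.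
  have [al [al0 Hal] Hlt] := sup_adherent ue Ahas.
  apply: (le_trans (y := al * u + b * v + e)); last by rewrite lerD2r Hal.
  rewrite addrAC lerD2r.
  have : sup A * u <= (al + e / (u + 1)) * u by rewrite ler_wpM2r // ltW // -ltrBlDr.
  move/le_trans; apply; rewrite mulrDl lerD2l mulrAC ler_pdivrMr ?ltr_wpDl //.
  by rewrite ler_pM2l //; lra.
move=> t t0.
have : ~ A (sup A + t).
  move=> HA; have := ub_le_sup (ex_intro _ 1 Aub) HA.
  move=> H; lra.
move=> nA.
have [u [v [u0 [v0 Huv]]]] : exists u v, 0 <= u /\ 0 <= v /\
    nu p u v < (sup A + t) * u + b * v.
  apply: contrapT => H; apply: nA; split; first by apply: addr_ge0; [exact: le_trans a0 aS|exact: ltW].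
  move=> u v u0 v0; rewrite leNgt; apply/negP => Hlt; apply: H.
  by exists u, v.
have nu0 : 0 <= nu p u v by exact: nu_ge0.
have nup : 0 < nu p u v.
  rewrite lt_neqAle nu0 andbT; apply/negP => /eqP nuz.
  have uz : u = 0 by apply/eqP; rewrite eq_le u0 andbT; rewrite (le_trans (nu_geu hp u0 v0)) // -nuz.
  have vz : v = 0 by apply/eqP; rewrite eq_le v0 andbT; rewrite (le_trans (nu_gev hp u0 v0)) // -nuz.
  by move: Huv; rewrite -nuz uz vz !mulr0 addr0 ltxx.
set n := nu p u v in nu0 nup Huv.
exists (n^-1 * u), (n^-1 * v); split.
- by rewrite mulr_ge0 // invr_ge0.
- by rewrite mulr_ge0 // invr_ge0.
- by rewrite nu_hom // ?invr_ge0 // mulVf // gt_eqF.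
have lam1 : n^-1 * u <= 1 by rewrite ler_pdivrMl // mulr1 nu_geu.
have : 1 < (sup A + t) * (n^-1 * u) + b * (n^-1 * v).
  by rewrite mulrCA (mulrCA b) -mulrDr ltr_pdivlMl // mulr1.
rewrite mulrDl -addrAC => H; rewrite ltrBlDr; apply: lt_le_trans H _.
by rewrite lerD2l ler_piMr // ltW.
Qed.

End DualPoint.

Lemma is_dual_scale (R : realType) (V : lmodType R) (N : V -> R) (nl : normlike N)
  (f : V -> R) c : is_dual N f -> is_dual N (fun x => c * f x).
Proof.
move=> fd; have H := is_dual_comb nl c 0 fd fd.
suff -> : (fun x => c * f x) = (fun x => c * f x + 0 * f x) by [].
by apply: funext => x; rewrite mul0r addr0.
Qed.

Section PartB.
Context (R : realType) (X Y : normedModType R) (p : \bar R).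
Hypothesis hp : (1%:E <= p)%E.
Notation N := (psum_norm X Y p).
Notation NX := (fun x : X => `|x|).
Notation NY := (fun y : Y => `|y|).
Let nlZp := @nlZ R X Y p hp.
Let nlX' := @nlX R X.
Let nlY' := @nlY R Y.

Lemma h0_pair (h : X * Y -> R) (u v : R) x y : is_dual N h ->
  h (u *: x, v *: y) = u * h (x, 0) + v * h (0, y).
Proof.
move=> hd; rewrite (congr1 (fun F => F (u *: x, v *: y)) (decomp hd)) /=.
have -> : ((u *: x, 0) : X * Y) = u *: (x, 0).
  by apply/eqP; rewrite xpair_eqE /= scaler0 !eqxx.
have -> : ((0, v *: y) : X * Y) = v *: (0, y).
  by apply/eqP; rewrite xpair_eqE /= scaler0 !eqxx.
by rewrite !(duZ hd).
Qed.

Lemma ball_comb (al b : R) (u : X -> R) (v : Y -> R) : 0 <= al -> 0 <= b ->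
  (forall s t, 0 <= s -> 0 <= t -> al * s + b * t <= nu p s t) ->
  dual_ball NX u -> dual_ball NY v -> dual_ball N (fun z => al * u z.1 + b * v z.2).
Proof.
move=> al0 b0 H [ud un] [vd vn]; split; first exact (comb_dual hp al b ud vd).
apply: (dn_le nlZp) => z Nz; apply: le_trans Nz.
apply: (le_trans (ler_normD _ _)); rewrite !normrM (ger0_norm al0) (ger0_norm b0).
apply: (le_trans (y := al * `|z.1| + b * `|z.2|)); last first.
  by apply: le_trans (H _ _ (normr_ge0 _) (normr_ge0 _)) _; rewrite psumE.
apply: lerD; apply: ler_wpM2l => //.
  apply: le_trans (dn_bound nlX' ud _) _; by rewrite ler_piMl.
apply: le_trans (dn_bound nlY' vd _) _; by rewrite ler_piMl.
Qed.

Lemma partB : wstar_d2p NX -> wstar_d2p NY -> wstar_d2p N.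
Proof.
move=> DX DY; apply (d2p_intro nlZp) => W h0 Wo W0 d d0.
pose e := Num.min d 1.
have e0 : 0 < e by rewrite lt_min d0 ltr01.
have e1 : e <= 1 by rewrite ge_min lexx orbT.
have ed : e <= d by rewrite ge_min lexx.
suff [g1 [g2 [Wg1 [Wg2 H]]]] : exists g1 g2, W g1 /\ W g2 /\ 2 - e <= dnorm N (g1 \- g2).
  by exists g1, g2; do 2!split => //; apply: le_trans H; rewrite lerB.
have [h0d h0n] := Wo.1 _ W0.
have [f0d f0n] := rest1_dual hp h0d.
have [g0d g0n] := rest2_dual hp h0d.
pose f0 := fun x => h0 (x, 0).
pose g0 := fun y => h0 (0, y).
pose a := dnorm NX f0.
pose b := dnorm NY g0.
have a0 : 0 <= a by exact (dn_ge0 nlX' f0d).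
have b0 : 0 <= b by exact (dn_ge0 nlY' g0d).
have Hab : forall u v, 0 <= u -> 0 <= v -> a * u + b * v <= nu p u v.
  move=> u v u0 v0; apply/ler_addgt0Pr => e' e'0.
  pose k := e' / (u + v + 1).
  have uv1 : 0 < u + v + 1 by rewrite ltr_wpDl // addr_ge0.
  have k0 : 0 < k by rewrite divr_gt0.
  have ka : a - k < a by rewrite ltrBlDr ltrDl.
  have kb : b - k < b by rewrite ltrBlDr ltrDl.
  have [x [Nx Hx]] := dn_gt nlX' f0d ka.
  have [y [Ny Hy]] := dn_gt nlY' g0d kb.
  have H1 : h0 (u *: x, v *: y) <= nu p u v.
    apply: le_trans (ler_norm _) _; apply: le_trans (dn_bound nlZp h0d _) _.
    apply: (le_trans (y := N (u *: x, v *: y))).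
      by rewrite ler_piMl // ps_ge0.
    rewrite psumE /= !normrZ (ger0_norm u0) (ger0_norm v0).
    by apply: nu_mono; rewrite ?mulr_ge0 // ler_piMr.
  rewrite (h0_pair _ _ _ _ h0d) in H1.
  have Hk : k * (u + v) <= e'.
    by rewrite /k mulrAC ler_pdivrMr // ler_pM2l //; lra.
  have Hu : a * u <= (f0 x + k) * u by rewrite ler_wpM2r // -lerBlDr ltW.
  have Hv : b * v <= (g0 y + k) * v by rewrite ler_wpM2r // -lerBlDr ltW.
  rewrite /f0 /g0 in Hu Hv.
  lra.
have [al [aal Hal Hpt]] := dual_point hp a0 b0 Hab.
have al0 : 0 <= al := le_trans a0 aal.
pose us := fun x => al^-1 * f0 x.
pose vs := fun y => b^-1 * g0 y.
have usb : dual_ball NX us.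
  split; first exact (is_dual_scale nlX' _ f0d).
  apply: (dn_le nlX') => x Nx; rewrite normrM ger0_norm ?invr_ge0 //.
  have fx : `|f0 x| <= a by exact (dn_ub nlX' f0d Nx).
  have [->|alp] := eqVneq al 0; first by rewrite invr0 mul0r.
  have alp' : 0 < al by rewrite lt_neqAle eq_sym alp al0.
  by rewrite ler_pdivrMl // mulr1 (le_trans fx).
have vsb : dual_ball NY vs.
  split; first exact (is_dual_scale nlY' _ g0d).
  apply: (dn_le nlY') => x Nx; rewrite normrM ger0_norm ?invr_ge0 //.
  have fx : `|g0 x| <= b by exact (dn_ub nlY' g0d Nx).
  have [->|alp] := eqVneq b 0; first by rewrite invr0 mul0r.
  have alp' : 0 < b by rewrite lt_neqAle eq_sym alp b0.
  by rewrite ler_pdivrMl // mulr1.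
have usE : forall x, al * us x = f0 x.
  move=> x; have [al00|alp] := eqVneq al 0.
    have az : a = 0 by apply/eqP; rewrite eq_le a0 andbT -al00.
    have := dn_bound nlX' f0d x; rewrite -/a az mul0r normr_le0 => /eqP H0.
    by rewrite /us /f0 H0 al00 mul0r.
  by rewrite /us mulrA mulfV // mul1r.
have vsE : forall y, b * vs y = g0 y.
  move=> x; have [al00|alp] := eqVneq b 0.
    have := dn_bound nlY' g0d x; rewrite -/b al00 mul0r normr_le0 => /eqP H0.
    by rewrite /vs /g0 H0 al00 mul0r.
  by rewrite /vs mulrA mulfV // mul1r.
pose Phi (u : X -> R) := fun z : X * Y => al * u z.1 + b * vs z.2.
have Phib : forall u, dual_ball NX u -> dual_ball N (Phi u).
  by move=> u ub; apply: ball_comb.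
have Uo := pullback_open (pi := fst) (c := al) (G := fun z : X * Y => b * vs z.2) Phib Wo.
have U0 : dual_ball NX us /\ W (Phi us).
  split => //; suff -> : Phi us = h0 by [].
  apply: funext => z; rewrite /Phi usE vsE /f0 /g0.
  by rewrite [RHS](congr1 (fun F => F z) (decomp h0d)).
have e20 : 0 < e / 2 by rewrite divr_gt0.
have [u1 [u2 [[u1b W1] [[u2b W2] Hd1]]]] := d2p_extract DX Uo U0 e20.
have [x [Nx Hx]] := dn_gt nlX' (is_dual_sub nlX' u1b.1 u2b.1) Hd1.
pose Psi1 (v : Y -> R) := fun z : X * Y => b * v z.2 + al * u1 z.1.
pose Psi2 (v : Y -> R) := fun z : X * Y => b * v z.2 + al * u2 z.1.
have Psi1b : forall v, dual_ball NY v -> dual_ball N (Psi1 v).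
  move=> v vb; have := ball_comb al0 b0 Hal u1b vb.
  by congr dual_ball; apply: funext => z; rewrite /Psi1 addrC.
have Psi2b : forall v, dual_ball NY v -> dual_ball N (Psi2 v).
  move=> v vb; have := ball_comb al0 b0 Hal u2b vb.
  by congr dual_ball; apply: funext => z; rewrite /Psi2 addrC.
have Vo := inter_open
  (pullback_open (pi := snd) (c := b) (G := fun z : X * Y => al * u1 z.1) Psi1b Wo)
  (pullback_open (pi := snd) (c := b) (G := fun z : X * Y => al * u2 z.1) Psi2b Wo).
have V0 : ([set v | dual_ball NY v /\ W (Psi1 v)] `&` [set v | dual_ball NY v /\ W (Psi2 v)]) vs.
  split; split => //.
    suff -> : Psi1 vs = Phi u1 by [].
    by apply: funext => z; rewrite /Psi1 /Phi addrC.
  suff -> : Psi2 vs = Phi u2 by [].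
  by apply: funext => z; rewrite /Psi2 /Phi addrC.
have [v1 [v2 [[[v1b Wv1] _] [[_ [v2b Wv2]] Hd2]]]] := d2p_extract DY Vo V0 e20.
have [y [Ny Hy]] := dn_gt nlY' (is_dual_sub nlY' v1b.1 v2b.1) Hd2.
have e40 : 0 < e / 4 by rewrite divr_gt0.
have [lam [mu [lam0 mu0 numu Hlm]]] := Hpt _ e40.
exists (Psi1 v1), (Psi2 v2); do 2!split => //.
pose z : X * Y := (lam *: x, mu *: y).
have Nz : N z <= 1.
  rewrite psumE /= !normrZ (ger0_norm lam0) (ger0_norm mu0); apply: le_trans numu.
  by apply: nu_mono; rewrite ?mulr_ge0 // ler_piMr.
have dd := is_dual_sub nlZp (Psi1b _ v1b).1 (Psi2b _ v2b).1.
have := dn_ub nlZp dd Nz; apply: le_trans; apply: le_trans (ler_norm _).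
have -> : (Psi1 v1 \- Psi2 v2) z = b * mu * (v1 \- v2) y + al * lam * (u1 \- u2) x.
  rewrite /Psi1 /Psi2 /z /= (duZ v1b.1) (duZ v2b.1) (duZ u1b.1) (duZ u2b.1); ring.
set P := (u1 \- u2) x in Hx *; set Q := (v1 \- v2) y in Hy *.
have bm0 : 0 <= b * mu by rewrite mulr_ge0.
have al0' : 0 <= al * lam by rewrite mulr_ge0.
apply: (le_trans (y := (b * mu + al * lam) * (2 - e / 2))).
  have c0 : 0 <= 2 - e / 2 by lra.
  apply: (le_trans (y := (1 - e / 4) * (2 - e / 2))).
    have : 0 <= e * e by rewrite mulr_ge0 // ltW.
    lra.
  by apply: ler_wpM2r => //; lra.
rewrite mulrDl; apply: lerD; apply: ler_wpM2l => //; exact: ltW.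
Qed.

End PartB.

Lemma nu_small (R : realType) (p : \bar R) : (1%:E < p)%E ->
  forall k : R, 0 < k -> exists2 t, 0 < t <= 1 & nu p 1 t <= 1 + k * t.
Proof.
case: p => [r||] //= r1 k k0; last first.
  exists 1; first by rewrite ltr01 lexx.
  by rewrite /= maxxx lerDl mulr1 ltW.
have r1' : 1 < r by rewrite -lte_fin.
have r0 : 0 < r by rewrite (lt_trans ltr01).
have rm0 : 0 < r - 1 by rewrite subr_gt0.
pose t := Num.min 1 (k `^ (r - 1)^-1).
have t0 : 0 < t by rewrite /t lt_min ltr01 powR_gt0.
have t1 : t <= 1 by rewrite /t ge_min lexx.
exists t; first by rewrite t0 t1.
have Htr : t `^ (r - 1) <= k.
  have -> : k = (k `^ (r - 1)^-1) `^ (r - 1).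
    by rewrite -powRrM mulVf ?gt_eqF // powRr1 // ltW.
  apply: ge0_ler_powR; rewrite ?nnegrE ?powR_ge0 //.
  - exact: ltW.
  - exact: ltW.
  - by rewrite /t ge_min lexx orbT.
rewrite powR1 /=.
apply: (le_trans (y := 1 + t `^ r)).
  apply: ler1_powR; first by rewrite lerDl powR_ge0.
  by rewrite invf_le1 // ltW.
rewrite lerD2l -(mulr_powRB1 (ltW t0) r0) mulrC.
by rewrite ler_wpM2r // ltW.
Qed.

Section Budget.
Context (R : realType) (X Y : normedModType R) (p : \bar R).
Hypothesis hp1 : (1%:E < p)%E.
Let hp : (1%:E <= p)%E := ltW hp1.
Notation N := (psum_norm X Y p).
Notation NX := (fun x : X => `|x|).
Notation NY := (fun y : Y => `|y|).
Let nlZp := @nlZ R X Y p hp.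
Let nlX' := @nlX R X.
Let nlY' := @nlY R Y.

Lemma rest1_ball (h : X * Y -> R) : dual_ball N h ->
  dual_ball NX (fun x => 1 * h (x, 0) + 0).
Proof.
move=> [hd hn]; have [d1 n1] := rest1_dual hp hd.
suff -> : (fun x => 1 * h (x, 0) + 0) = (fun x => h (x, 0)) by split => //; exact: le_trans n1 hn.
by apply: funext => x; rewrite mul1r addr0.
Qed.

Lemma zero_ballY : dual_ball NY (fun _ => 0).
Proof.
split; last by apply: (dn_le nlY') => y _; rewrite normr0.
split; first by move=> a u v; rewrite mulr0 addr0.
by exists 0 => y; rewrite normr0 mul0r.
Qed.

Lemma lift_ball (f : X -> R) : dual_ball NX f ->
  dual_ball N (fun z => 1 * f z.1 + 0 * (fun _ : Y => 0) z.2).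
Proof.
move=> fb; apply: ball_comb => //; first by move=> s t s0 t0; rewrite mul1r mul0r addr0 nu_geu.
exact: zero_ballY.
Qed.

Lemma side_small (h : X * Y -> R) (x' : X) (k t eta : R) : dual_ball N h ->
  `|x'| <= 1 -> 1 - eta < h (x', 0) -> 0 < t -> nu p 1 t <= 1 + k * t ->
  forall y : Y, `|y| <= 1 -> `|h (0, y)| <= k + eta / t.
Proof.
move=> [hd hn] x'1 Hx t0 Hnu y y1.
have key : forall s, `|s| = t -> h (x', 0) + s * h (0, y) <= 1 + k * t.
  move=> s st; have := h0_pair 1 s x' y hd; rewrite scale1r mul1r => <-.
  apply: le_trans (ler_norm _) _; apply: le_trans (dn_bound nlZp hd _) _.
  apply: le_trans (ler_piMl (ps_ge0 hp _) hn) _.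
  rewrite psumE /= normrZ st; apply: le_trans Hnu.
  apply: nu_mono => //; first by rewrite mulr_ge0 // ltW.
  by rewrite ler_piMr // ltW.
have k1 := key t (gtr0_norm t0).
have nt : `|- t| = t by rewrite normrN gtr0_norm.
have k2 := key (- t) nt.
have Ht : t * `|h (0, y)| <= k * t + eta.
  have [hy0|hy0] := leP 0 (h (0, y)).
    by rewrite ger0_norm //; lra.
  by rewrite ltr0_norm //; lra.
rewrite -(ler_pM2l t0) mulrDr mulrCA mulfV ?gt_eqF // mulr1 mulrC.
by rewrite mulrC (mulrC t k).
Qed.

Lemma budget : wstar_d2p N -> forall eps : R, 0 < eps -> exists2 eta : R, 0 < eta &
  forall V, wstar_rel_open NX V -> forall (f : X -> R) (x' : X), V f -> `|x'| <= 1 ->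
  1 - eta < f x' -> exists g1 g2, V g1 /\ V g2 /\ 2 - eps < dnorm NX (g1 \- g2).
Proof.
move=> DZ eps e0; pose k := eps / 5.
have k0 : 0 < k by rewrite divr_gt0.
have [t /andP[t0 t1] Hnu] := nu_small hp1 k0.
exists (k * t); first by rewrite mulr_gt0.
move=> V Vo f x' Vf x'1 Hf.
pose V' := V `&` [set g | dual_ball NX g /\ 1 - k * t < g x'].
have V'o : wstar_rel_open NX V' by apply: inter_open => //; exact: slice_open.
have V'f : V' f by split => //; split => //; exact: Vo.1.
have Phib := rest1_ball.
have Wo := pullback_open (pi := fun x : X => (x, 0)) (c := 1) (G := fun _ : X => 0) Phib V'o.
have W0 : [set h | dual_ball N h /\ V' (fun x => 1 * h (x, 0) + 0)]
    (fun z => 1 * f z.1 + 0 * (fun _ : Y => 0) z.2).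
  split; first exact: lift_ball (Vo.1 _ Vf).
  suff -> : (fun x : X => 1 * (1 * f (x, 0 : Y).1 + 0 * (fun _ : Y => 0) (x, 0 : Y).2) + 0) = f by [].
  by apply: funext => x /=; rewrite !mul1r mulr0 !addr0.
have [h1 [h2 [[h1b [V1 S1]] [[h2b [V2 S2]] Hd]]]] := d2p_extract DZ Wo W0 k0.
have [[z1 z2] [Nz Hz]] := dn_gt nlZp (is_dual_sub nlZp h1b.1 h2b.1) Hd.
have z11 : `|z1| <= 1 by apply: le_trans (ps_ge1 hp (z1, z2)) Nz.
have z21 : `|z2| <= 1 by apply: le_trans (ps_ge2 hp (z1, z2)) Nz.
have ht : k * t / t = k by rewrite mulfK ?gt_eqF.
have B1 := side_small h1b x'1 (eta := k * t) (k := k) _ t0 Hnu z21.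
have B2 := side_small h2b x'1 (eta := k * t) (k := k) _ t0 Hnu z21.
rewrite ht in B1 B2.
have E1 : 1 - k * t < h1 (x', 0) by move: S1.2; rewrite mul1r addr0.
have E2 : 1 - k * t < h2 (x', 0) by move: S2.2; rewrite mul1r addr0.
have {B1 B2} [B1 B2] := (B1 E1, B2 E2).
exists (fun x => 1 * h1 (x, 0) + 0), (fun x => 1 * h2 (x, 0) + 0); do 2!split => //.
have gd := is_dual_sub nlX' (rest1_ball h1b).1 (rest1_ball h2b).1.
have := dn_ub nlX' gd z11; apply: lt_le_trans; apply: lt_le_trans (ler_norm _).
rewrite /= !mul1r !addr0.
have Hz' := Hz; rewrite /= (congr1 (fun F => F (z1, z2)) (decomp h1b.1)) in Hz'.
rewrite /= (congr1 (fun F => F (z1, z2)) (decomp h2b.1)) /= in Hz'.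
move: B1 B2; rewrite !ler_norml => /andP[B1a B1b] /andP[B2a B2b].
have hk : k * 5 = eps by rewrite /k mulfVK // pnatr_eq0.
lra.
Qed.

End Budget.

Section HahnBanach.
Context (R : realType) (V : lmodType R).

Definition sublin (q : V -> R) :=
  (forall x y, q (x + y) <= q x + q y) /\ (forall (s : R) x, 0 < s -> q (s *: x) <= s * q x).

Section SL.
Variable q : V -> R.
Hypothesis qs : sublin q.

Lemma sl0 : q 0 = 0.
Proof.
case: qs => _ H.
have h2 : q 0 <= 2 * q 0 by have := H 2 0; rewrite scaler0; apply; rewrite ltr0n.
have h1 : q 0 <= 2^-1 * q 0.
  by have := H 2^-1 0; rewrite scaler0; apply; rewrite invr_gt0 ltr0n.
lra.
Qed.

Lemma sl_hom (s : R) x : 0 < s -> q (s *: x) = s * q x.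
Proof.
move=> s0; case: qs => _ H; apply/eqP; rewrite eq_le H //=.
have := H s^-1 (s *: x); rewrite invr_gt0 s0 scalerA mulVf ?gt_eqF // scale1r => /(_ isT).
by rewrite ler_pdivlMl.
Qed.

Lemma sl_lb x : - q (- x) <= q x.
Proof. by case: qs => H _; have := H x (- x); rewrite subrr sl0; lra. Qed.

Lemma sl_tq (t : R) y : 0 <= t -> t * q y <= q (t *: y).
Proof.
rewrite le_eqVlt => /orP[/eqP<-|t0]; first by rewrite mul0r scale0r sl0.
by rewrite sl_hom.
Qed.

Variable y : V.
Definition rset x := [set q (x + t *: y) - t * q y | t in [set t : R | 0 <= t]].
Definition rq x := inf (rset x).

Lemma rset_lb x : lbound (rset x) (- q (- x)).
Proof.
move=> _ [t /= t0 <-]; case: qs => H _.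
have := H (x + t *: y) (- x); rewrite addrC addKr => h.
have := sl_tq y t0; lra.
Qed.

Lemma rset_ne x : rset x !=set0.
Proof. by exists (q (x + 0 *: y) - 0 * q y); exists 0 => //=. Qed.

Lemma rq_le x t : 0 <= t -> rq x <= q (x + t *: y) - t * q y.
Proof.
move=> t0; apply: ge_inf; first by exists (- q (- x)); exact: rset_lb.
by exists t.
Qed.

Lemma rq_glb x c : (forall t, 0 <= t -> c <= q (x + t *: y) - t * q y) -> c <= rq x.
Proof. by move=> H; apply: lb_le_inf (rset_ne x) _ => _ [t /= t0 <-]; exact: H. Qed.

Lemma rq_leq x : rq x <= q x.
Proof. by have := rq_le x (lexx 0); rewrite scale0r addr0 mul0r subr0. Qed.

Lemma rq_neg : rq (- y) <= - q y.
Proof. by have := rq_le (- y) ler01; rewrite scale1r addNr sl0 mul1r sub0r. Qed.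

Lemma rq_sublin : sublin rq.
Proof.
case: qs => Hs Hh; split.
  move=> x1 x2.
  have H : forall t1 t2, 0 <= t1 -> 0 <= t2 -> rq (x1 + x2) <=
      (q (x1 + t1 *: y) - t1 * q y) + (q (x2 + t2 *: y) - t2 * q y).
    move=> t1 t2 t10 t20.
    apply: le_trans (rq_le (x1 + x2) (addr_ge0 t10 t20)) _.
    rewrite scalerDl.
    have := Hs (x1 + t1 *: y) (x2 + t2 *: y).
    have -> : x1 + t1 *: y + (x2 + t2 *: y) = x1 + x2 + (t1 *: y + t2 *: y).
      by rewrite addrACA.
    rewrite mulrDl; lra.
  have H2 : forall t2, 0 <= t2 -> rq (x1 + x2) - (q (x2 + t2 *: y) - t2 * q y) <= rq x1.
    move=> t2 t20; apply: rq_glb => t1 t10; have := H t1 t2 t10 t20; lra.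
  have H3 : rq (x1 + x2) - rq x1 <= rq x2.
    by apply: rq_glb => t2 t20; have := H2 t2 t20; lra.
  lra.
move=> s x s0.
have G : forall t, 0 <= t -> rq (s *: x) <= s * (q (x + t *: y) - t * q y).
  move=> t t0; apply: le_trans (rq_le (s *: x) (mulr_ge0 (ltW s0) t0)) _.
  by rewrite -scalerA -scalerDr sl_hom // mulrBr mulrA.
suff h : s^-1 * rq (s *: x) <= rq x.
  by have := ler_wpM2l (ltW s0) h; rewrite mulrA mulfV ?gt_eqF // mul1r.
apply: rq_glb => t t0.
by rewrite -(ler_pM2l s0) mulrA mulfV ?gt_eqF // mul1r; exact: G.
Qed.

End SL.

Section Zorn.
Variable p0 : V -> R.
Hypothesis p0s : sublin p0.

Definition Tq := {q : V -> R | sublin q /\ forall x, q x <= p0 x}.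
Definition Rq : rel Tq := fun a b => `[< forall x, sval b x <= sval a x >].

Lemma Tq_lb (s : Tq) x : - p0 (- x) <= sval s x.
Proof.
case: s => q [qs qp] /=; apply: le_trans (sl_lb qs x).
by rewrite lerN2 qp.
Qed.

Lemma minimal_exists : exists q : Tq, forall s, Rq q s -> Rq s q.
Proof.
have t0 : Tq by exists p0; split => // x.
apply: (ZL_preorder t0).
- by move=> t; apply/asboolP => x.
- move=> a b c /asboolP Hab /asboolP Hbc; apply/asboolP => x.
  exact: le_trans (Hbc x) (Hab x).
move=> A Atot.
case: (pselect (exists a, A a)) => [[a0 Aa0]|nA]; last first.
  by exists t0 => s As; exfalso; apply: nA; exists s.
pose m x := inf [set sval s x | s in A].
have mne : forall x, [set sval s x | s in A] !=set0.
  by move=> x; exists (sval a0 x), a0.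
have mlb : forall x, has_lbound [set sval s x | s in A].
  by move=> x; exists (- p0 (- x)) => _ [s _ <-]; exact: Tq_lb.
have mle : forall s x, A s -> m x <= sval s x.
  by move=> s x As; apply: (ge_inf (mlb x)); exists s.
have mglb : forall x c, (forall s, A s -> c <= sval s x) -> c <= m x.
  by move=> x c H; apply: lb_le_inf (mne x) _ => _ [s As <-]; exact: H.
have msub : sublin m.
  split.
    move=> x y.
    have K : forall s1 s2, A s1 -> A s2 -> m (x + y) <= sval s1 x + sval s2 y.
      move=> s1 s2 As1 As2.
      case: (proj2_sig s1) => [[q1a _] _]; case: (proj2_sig s2) => [[q2a _] _].
      have := q1a x y; have := q2a x y.
      have := mle s1 (x + y) As1; have := mle s2 (x + y) As2.
      have [/asboolP H|/asboolP H] := Atot s1 s2 As1 As2.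
        have := H x; lra.
      have := H y; lra.
    have G := mglb.
    have K2 : forall s2, A s2 -> m (x + y) - sval s2 y <= m x.
      move=> s2 As2; apply: G => s1 As1; have := K s1 s2 As1 As2; lra.
    have K3 : m (x + y) - m x <= m y.
      apply: G => s2 As2; have := K2 s2 As2; lra.
    lra.
  move=> s x s0.
  have G := mglb.
  suff h : s^-1 * m (s *: x) <= m x.
    by have := ler_wpM2l (ltW s0) h; rewrite mulrA mulfV ?gt_eqF // mul1r.
  apply: G => a Aa.
  rewrite -(ler_pM2l s0) mulrA mulfV ?gt_eqF // mul1r.
  apply: le_trans (mle a _ Aa) _.
  by case: (proj2_sig a) => [[_ qh] _]; exact: qh.
have mp0 : forall x, m x <= p0 x.
  move=> x; apply: le_trans (mle a0 x Aa0) _.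
  by case: (proj2_sig a0) => _ qp; exact: qp.
exists (exist _ m (conj msub mp0)) => s As; apply/asboolP => x /=.
exact: mle.
Qed.

Lemma minimal_linear (q : Tq) : (forall s, Rq q s -> Rq s q) ->
  forall (a : R) u v, sval q (a *: u + v) = a * sval q u + sval q v.
Proof.
case: q => q [qs qp] /= Hmin.
have qneg : forall y, q (- y) = - q y.
  move=> y; have rs := rq_sublin qs y.
  have rp : forall x, rq q y x <= p0 x by move=> x; apply: le_trans (rq_leq qs y x) (qp x).
  have := Hmin (exist _ (rq q y) (conj rs rp)).
  have H1 : Rq (exist _ q (conj qs qp)) (exist _ (rq q y) (conj rs rp)).
    by apply/asboolP => x /=; exact: rq_leq.
  move=> /(_ H1) /asboolP /= /(_ (- y)) H2.
  have := rq_neg qs y; have := sl_lb qs (- y); rewrite opprK; lra.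
have qadd : forall u v, q (u + v) = q u + q v.
  move=> u v; have [Hs _] := qs; apply/eqP; rewrite eq_le Hs /=.
  have := Hs (u + v) (- v); rewrite addrK qneg; lra.
move=> a u v; rewrite qadd; congr (_ + _).
have [a0|a0|->] := ltgtP a 0; last by rewrite scale0r mul0r sl0.
  have -> : a *: u = - ((- a) *: u) by rewrite scaleNr opprK.
  by rewrite qneg sl_hom // ?oppr_gt0 // mulNr opprK.
by rewrite sl_hom.
Qed.

End Zorn.
End HahnBanach.

Section HBNorm.
Context (R : realType) (X : normedModType R).

Lemma norm_sublin : sublin (fun x : X => `|x|).
Proof.
split; first by move=> x y; exact: ler_normD.
by move=> s x s0; rewrite normrZ gtr0_norm.
Qed.

Lemma hahn_banach_norm (x0 : X) : exists f : X -> R,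
  is_dual (fun x : X => `|x|) f /\ (forall x, `|f x| <= `|x|) /\ f x0 = `|x0|.
Proof.
pose p0 := rq (fun x : X => `|x|) x0.
have p0s : sublin p0 := rq_sublin norm_sublin x0.
have p0n : forall x, p0 x <= `|x| := rq_leq norm_sublin x0.
have [q Hq] := minimal_exists p0s.
have ql := minimal_linear Hq.
case: q Hq ql => f [fs fp] /= _ ql.
have fN : forall x, f (- x) = - f x.
  move=> x; have := ql (-1) x 0; rewrite addr0 scaleN1r => ->.
  have := ql 1 0 0; rewrite scaler0 addr0 mul1r => /eqP; rewrite -subr_eq subrr eq_sym => /eqP ->.
  by rewrite addr0 mulN1r.
have fle : forall x, f x <= `|x| by move=> x; exact: le_trans (fp x) (p0n x).
exists f; split.
  split; first by move=> a u v; exact: ql.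
  exists 1 => x; rewrite mul1r ler_norml fle andbT.
  by rewrite lerNl -fN -(normrN x) fle.
split.
  by move=> x; rewrite ler_norml fle andbT lerNl -fN -(normrN x) fle.
apply/eqP; rewrite eq_le fle /=.
have := fp (- x0); have := rq_neg norm_sublin x0; rewrite -/p0 fN; lra.
Qed.

End HBNorm.

Lemma lip_cont (R : realType) (F : R -> R) (K : R) : 0 <= K ->
  (forall s t, `|F s - F t| <= K * `|s - t|) -> continuous F.
Proof.
move=> K0 H x; apply/cvgrPdist_lt => e e0.
have d0 : 0 < e / (K + 1) by rewrite divr_gt0 // ltr_wpDl.
near=> t.
apply: le_lt_trans (H x t) _.
have : `|x - t| < e / (K + 1).
  near: t; have := near_ball x (e / (K + 1)) d0. apply: filterS => y; rewrite -ball_normE /=.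
  done.
move=> h; apply: (le_lt_trans (y := K * (e / (K + 1)))).
  by apply: ler_wpM2l => //; exact: ltW.
by rewrite mulrA ltr_pdivrMr ?ltr_wpDl // mulrC ltr_pM2l // ltrDl.
Unshelve. all: by end_near.
Qed.

Lemma fin_bound (R : realType) (T : eqType) (s : seq T) (F : T -> R) :
  exists M, 0 <= M /\ forall x, x \in s -> F x <= M.
Proof.
elim: s => [|a s [M [M0 HM]]]; first by exists 0.
exists (Num.max M (F a)); split; first by rewrite le_max M0.
move=> x; rewrite in_cons => /orP[/eqP->|xs]; first by rewrite le_max lexx orbT.
by rewrite le_max HM.
Qed.

Section PartC.
Context (R : realType) (X Y : normedModType R) (p : \bar R).
Hypothesis hp1 : (1%:E < p)%E.
Let hp : (1%:E <= p)%E := ltW hp1.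
Notation N := (psum_norm X Y p).
Notation NX := (fun x : X => `|x|).
Let nlZp := @nlZ R X Y p hp.
Let nlX' := @nlX R X.

Lemma stepA (hX : exists x : X, x != 0) (U : set (X -> R)) f0 :
  wstar_rel_open NX U -> U f0 ->
  exists f1 (s1 : seq X) (e1 : R) (w : X), [/\ 0 < e1, dual_ball NX f1, `|w| <= 1, 0 < f1 w &
     [set g | dual_ball NX g /\ forall x, x \in s1 -> `|g x - f1 x| < e1] `<=` U].
Proof.
move=> Uo Uf0; have f0b := Uo.1 _ Uf0.
have [s [e [e0 sub]]] := Uo.2 _ Uf0.
case: (pselect (exists w : X, `|w| <= 1 /\ 0 < f0 w)) => [[w [w1 fw]]|nw].
  by exists f0, s, e, w.
have f0z : forall x, f0 x = 0.
  have dn0 : dnorm NX f0 <= 0.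
    apply: (dn_le nlX') => x x1.
    have h1 : f0 x <= 0 by rewrite leNgt; apply/negP => h; apply: nw; exists x.
    have h2 : f0 (- x) <= 0.
      by rewrite leNgt; apply/negP => h; apply: nw; exists (- x); rewrite normrN.
    rewrite (duN f0b.1) in h2; rewrite ler_norml; lra.
  move=> x; have := dn_bound nlX' f0b.1 x.
  have -> : dnorm NX f0 = 0 by apply/eqP; rewrite eq_le dn0 (dn_ge0 nlX' f0b.1).
  by rewrite mul0r normr_le0 => /eqP.
have [x0 x0n] := hX.
have [u0 [u0d [u0b u0x]]] := hahn_banach_norm x0.
have [M [M0 HM]] := fin_bound s (fun x => `|u0 x|).
pose c := Num.min 1 (e / (M + 1)).
have M1 : 0 < M + 1 by rewrite ltr_wpDl.
have c0 : 0 < c by rewrite lt_min ltr01 divr_gt0.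
have c1 : c <= 1 by rewrite ge_min lexx.
have cM : c * M < e.
  apply: (le_lt_trans (y := e / (M + 1) * M)).
    by apply: ler_wpM2r => //; rewrite ge_min lexx orbT.
  by rewrite mulrAC ltr_pdivrMr // ltr_pM2l // ltrDl.
pose f1 := fun x => c * u0 x.
have f1b : dual_ball NX f1.
  split; first exact (is_dual_scale nlX' c u0d).
  apply: (dn_le nlX') => x x1; rewrite normrM gtr0_norm //.
  apply: le_trans (ler_wpM2l (ltW c0) (le_trans (u0b x) x1)) _.
  by rewrite mulr1.
have B0o := nbhd_open NX f0 s e.
have f1B0 : [set g | dual_ball NX g /\ forall x, x \in s -> `|g x - f0 x| < e] f1.
  split => // x xs; rewrite f0z subr0 /f1 normrM gtr0_norm //.
  apply: le_lt_trans cM; apply: ler_wpM2l; [exact: ltW|exact: HM].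
have [s1 [e1 [e10 sub1]]] := B0o.2 _ f1B0.
have x0p : 0 < `|x0| by rewrite normr_gt0.
exists f1, s1, e1, (`|x0|^-1 *: x0); split => //.
- by rewrite normrZ ger0_norm ?invr_ge0 // mulVf // gt_eqF.
- by rewrite /f1 (duZ u0d) u0x mulVf ?gt_eqF // mulr1.
by move=> g /sub1 /sub.
Qed.

Lemma seed (DZ : wstar_d2p N) (hX : exists x : X, x != 0) (U : set (X -> R)) f0 :
  wstar_rel_open NX U -> U f0 -> forall eta, 0 < eta ->
  exists f x', U f /\ `|x'| <= 1 /\ 1 - eta < f x'.
Proof.
move=> Uo Uf0 eta eta0.
have [f1 [s1 [e1 [w [e10 f1b w1 fw sub]]]]] := stepA hX Uo Uf0.
have f1U : U f1 by apply: sub; split => // x _; rewrite subrr normr0.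
pose a := dnorm NX f1.
have a0 : 0 < a by apply: lt_le_trans fw _; apply: le_trans (ler_norm _) (dn_ub nlX' f1b.1 w1).
have [Ha|Ha] := ltP (1 - eta) a.
  have [x' [x'1 Hx']] := dn_gt nlX' f1b.1 Ha.
  by exists f1, x'.
have eta1 : eta < 1 by lra.
have e20 : 0 < eta / 2 by rewrite divr_gt0.
have [etaL etaL0 HL] := budget hp1 DZ e20.
pose u := fun x => a^-1 * f1 x.
have ub : dual_ball NX u.
  split; first exact (is_dual_scale nlX' _ f1b.1).
  have ai : 0 <= a^-1 by rewrite invr_ge0 ltW.
  apply: (dn_le nlX') => x x1; rewrite normrM (ger0_norm ai).
  by rewrite ler_pdivrMl // mulr1 (dn_ub nlX' f1b.1 x1).
have aL : a * (1 - etaL) < a.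
  by rewrite -[ltRHS]mulr1 ltr_pM2l // ltrBlDr ltrDl.
have [w0 [w01 Hw0]] := dn_gt nlX' f1b.1 aL.
have Hu : 1 - etaL < u w0 by rewrite /u ltr_pdivlMl.
pose V := [set g | dual_ball NX g /\ forall x, x \in s1 -> `|g x - u x| < e1 / 4].
have Vo : wstar_rel_open NX V := nbhd_open NX u s1 (e1 / 4).
have e14 : 0 < e1 / 4 by rewrite divr_gt0.
have Vu : V u by split => // x _; rewrite subrr normr0.
have [g1 [g2 [[g1b g1s] [[g2b g2s] Hg]]]] := HL V Vo u w0 Vu w01 Hu.
pose psi := g1 \- g2.
have psid : is_dual NX psi := is_dual_sub nlX' g1b.1 g2b.1.
pose Fc (t : R) := fun x => 1 * f1 x + t * psi x.
have Fcd : forall t, is_dual NX (Fc t) by move=> t; exact (is_dual_comb nlX' 1 t f1b.1 psid).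
pose F (t : R) := dnorm NX (Fc t).
have Fup : forall s t, F s <= F t + `|s - t| * dnorm NX psi.
  move=> s t; have := dn_comb nlX' 1 (s - t) (Fcd t) psid.
  rewrite normr1 mul1r.
  suff -> : (fun x => 1 * Fc t x + (s - t) * psi x) = Fc s by [].
  by apply: funext => x; rewrite /Fc; ring.
have Flip : forall s t, `|F s - F t| <= dnorm NX psi * `|s - t|.
  move=> s t; rewrite ler_norml; have := Fup s t; have := Fup t s.
  rewrite (distrC t s); lra.
have psi0 : 0 <= dnorm NX psi := dn_ge0 nlX' psid.
have Fcont : continuous F := lip_cont psi0 Flip.
have F0 : F 0 <= a.
  have := Fup 0 0; rewrite subrr normr0 mul0r addr0.
  suff -> : F 0 = a by [].
  by rewrite /F /a; congr dnorm; apply: funext => x; rewrite /Fc mul1r mul0r addr0.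
have F1 : dnorm NX psi <= F 1 + a.
  have := dn_comb nlX' 1 (-1) (Fcd 1) f1b.1.
  rewrite normr1 normrN normr1 !mul1r.
  suff -> : (fun x => 1 * Fc 1 x + -1 * f1 x) = psi by [].
  by apply: funext => x; rewrite /Fc; ring.
have F1' : 1 < F 1 by lra.
have F0' : F 0 < 1 by lra.
have [t t01 Ft] : exists2 t, t \in `[0, 1] & F t = 1.
  apply: IVT; first exact: ler01.
    by apply: continuous_subspaceT.
  apply/andP; split.
    by rewrite ge_min; apply/orP; left; exact: ltW.
  by rewrite le_max; apply/orP; right; exact: ltW.
move: t01; rewrite in_itv /= => /andP[t0 t1].
have fb : dual_ball NX (Fc t) by split => //; rewrite -/(F t) Ft.
have fU : U (Fc t).
  apply: sub; split => // x xs.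
  rewrite /Fc mul1r addrC addKr normrM ger0_norm //.
  apply: (le_lt_trans (y := `|psi x|)); first by rewrite ler_piMl.
  have := g1s x xs; have := g2s x xs.
  rewrite /psi /= => h2 h1.
  have : `|g1 x - g2 x| <= `|g1 x - u x| + `|g2 x - u x|.
    by rewrite -(normrN (g2 x - u x)) opprB; apply: le_trans (ler_normD _ _); rewrite addrA subrK.
  lra.
have Hlt : 1 - eta < F t by rewrite Ft; lra.
have [x' [x'1 Hx']] := dn_gt nlX' (Fcd t) Hlt.
by exists (Fc t), x'.
Qed.

Lemma partC (hX : exists x : X, x != 0) : wstar_d2p N -> wstar_d2p NX.
Proof.
move=> DZ; apply (d2p_intro nlX') => U f0 Uo Uf0 d d0.
have [eta eta0 HL] := budget hp1 DZ d0.
have [f [x' [Uf [x'1 Hf]]]] := seed DZ hX Uo Uf0 eta0.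
have [g1 [g2 [U1 [U2 H]]]] := HL U Uo f x' Uf x'1 Hf.
by exists g1, g2; do 2!split => //; exact: ltW.
Qed.

End PartC.

Unset Implicit Arguments.

Theorem corollary4p7 (R : realType) (X Y : completeNormedModType R)
  (hX : exists x : X, x != 0) (hY : exists y : Y, y != 0) :
  (wstar_d2p (fun x : X => `|x|) ->
     wstar_d2p (psum_norm X Y 1%:E)) /\
  (forall p : \bar R, (1%:E < p)%E ->
     wstar_d2p (fun x : X => `|x|) -> wstar_d2p (fun y : Y => `|y|) ->
     wstar_d2p (psum_norm X Y p)) /\
  (forall p : \bar R, (1%:E < p)%E ->
     wstar_d2p (psum_norm X Y p) -> wstar_d2p (fun x : X => `|x|)).
Proof.
split; first exact: (@partA R X Y).
split.
  move=> p hp1 DX DY; exact: (@partB R X Y p (ltW hp1) DX DY).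
move=> p hp1 DZ; exact: (@partC R X Y p hp1 hX DZ).
Qed.
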